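(* Let $0\le r\le m$, $H\in\mathcal G(m,r;2)$, $\mathbf S_r\in\mathrm{Sym}(r;2)$ and $\mathbf b\in\mathbb F_2^m$. Then $$\mathbf w^{H,\mathbf S_r}_{\mathbf b}=\mathbf G_D(\mathbf P_{\mathcal I}^T)\,\mathbf G_U(\tilde{\mathbf S}_r)\,\mathbf G_\Omega(r)\,\mathbf Z(m,r)\,\mathbf e_{\mathbf b},$$ where $\mathbf Z(m,r)=\mathbf I_{2^r}\otimes\sigma_z^{\otimes(m-r)}$. In particular each binary subspace chirp is, up to a sign $\pm1$, the $\mathbf b$-th column of the unitary matrix $\mathbf G_D(\mathbf P_{\mathcal I}^T)\mathbf G_U(\tilde{\mathbf S}_r)\mathbf G_\Omega(r)$.
   Context: Fix $m\ge1$, $N=2^m$. Binary vectors are columns over $\mathbb F_2$; $\mathrm{Sym}(r;2)$ is the set of symmetric binary $r\times r$ matrices, $\mathcal G(m,r;2)$ the set of $r$-dimensional subspaces of $\mathbb F_2^m$. The standard basis of $\mathbb C^N=(\mathbb C^2)^{\otimes m}$ is $\{\mathbf e_{\mathbf v}=\mathbf e_{v_1}\otimes\cdots\otimes\mathbf e_{v_m}:\mathbf v\in\mathbb F_2^m\}$ and vectors of $\mathbb C^N$ are indexed by $\mathbb F_2^m$. Whenever a binary expression appears in an exponent of $i$, binary entries are lifted to the integers $0,1$ and the expression is evaluated in $\mathbb Z$ (equivalently mod 4). $\sigma_z=\mathrm{diag}(1,-1)$. Clifford-type matrices: for $\mathbf Q\in\mathrm{GL}(m;2)$, $\mathbf G_D(\mathbf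 Q)$ is the permutation matrix with $\mathbf e_{\mathbf v}\mapsto\mathbf e_{\mathbf Q^T\mathbf v}$; for $\mathbf S\in\mathrm{Sym}(m;2)$, $\mathbf G_U(\mathbf S)=\mathrm{diag}(i^{\mathbf v^T\mathbf S\mathbf v})_{\mathbf v\in\mathbb F_2^m}$; $\mathbf G_\Omega(r)=\mathbf H_2^{\otimes r}\otimes\mathbf I_{2^{m-r}}$ with $\mathbf H_2=\frac1{\sqrt2}\begin{pmatrix}1&1\\1&-1\end{pmatrix}$. Echelon data: for $0\le r\le m$ and $H\in\mathcal G(m,r;2)$, let $\mathbf H_{\mathcal I}$ be the unique $m\times r$ binary matrix in column reduced echelon form with column space $H$: there are indices $i_1<\dots<i_r$, $\mathcal I=\{i_1,\dots,i_r\}$, such that rows $i_1,\dots,i_r$ of $\mathbf H_{\mathcal I}$ form $\mathbf I_r$ and column $j$ of $\mathbf H_{\mathcal I}$ is zero in all rows above row $i_j$. Let $\mathbf I_{\mathcal I}$ (resp. $\mathbf I_{\tilde{\mathcal I}}$) be the $m\times r$ (resp. $m\times(m-r)$) matrix whose columns are the standard basis vectors $\mathbf e_i$ with $i\in\mathcal I$ (resp. $i\notin\mathcal I$), in increasing order of $i$. Put $\mathbf P_{\mathcal I}=[\mathbf H_{\mathcal I}\ \ \mathbf I_{\tilde{\mathcal I}}]\in\mathrm{GL}(m;2)$, and define the $m\times(m-r)$ matrix $\tilde{\mathbf H}_{\mathcal I}$ by $\mathbf P_{\mathcal I}^{-T}=[\mathbf I_{\mathcal I}\ \ \tilde{\mathbf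 H}_{\mathcal I}]$. (For $r=0$: $H=\{0\}$, $\mathbf P_{\mathcal I}=\mathbf I_m$.) For $\mathbf S_r\in\mathrm{Sym}(r;2)$, $\tilde{\mathbf S}_r\in\mathrm{Sym}(m;2)$ denotes the matrix with $\mathbf S_r$ as its upper-left $r\times r$ block and zeros elsewhere. Binary subspace chirps: let $f(\mathbf v,\mathbf w,r)=\prod_{i=r+1}^m(1+v_i+w_i)$ computed in $\mathbb F_2$ and viewed in $\{0,1\}$ (so $f=1$ iff $\mathbf v,\mathbf w$ agree in their last $m-r$ coordinates). For $\mathbf b\in\mathbb F_2^m$, the binary subspace chirp (BSSC) $\mathbf w_{\mathbf b}=\mathbf w^{H,\mathbf S_r}_{\mathbf b}\in\mathbb C^N$ has entries $\mathbf w_{\mathbf b}(\mathbf a)=2^{-r/2}\,i^{\mathbf u^T\tilde{\mathbf S}_r\mathbf u+2\mathbf b^T\mathbf u}\,f(\mathbf b,\mathbf u,r)$ with $\mathbf u=\mathbf P_{\mathcal I}^{-1}\mathbf a\in\mathbb F_2^m$, for $\mathbf a\in\mathbb F_2^m$. The integer $r$ is its rank. *)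

(* Defs.v *)
From HB Require Import structures.
From mathcomp Require Import all_boot all_order all_algebra.
From mathcomp Require Import algC.
Set Implicit Arguments. Unset Strict Implicit. Unset Printing Implicit Defensive.
Import Order.TTheory GRing.Theory Num.Theory.
Local Open Scope ring_scope.

(* Binary vectors of F_2^m are columns 'cV['F_2]_m; vectors of C^N (N = 2^m)
   are functions indexed by F_2^m, and N x N complex matrices are functions
   of two such indices (row, column). *)
Definition bvec (m : nat) := 'cV['F_2]_m.
Definition cvec (m : nat) := bvec m -> algC.
Definition cmat (m : nat) := bvec m -> bvec m -> algC.

Definition lift2 (x : 'F_2) : nat := nat_of_ord x.

Definition mapp m (A : cmat m) (v : cvec m) : cvec m :=
  fun x => \sum_(z : bvec m) A x z * v z.
Definition mmul m (A B : cmat m) : cmat m :=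
  fun x y => \sum_(z : bvec m) A x z * B z y.
Definition madj m (A : cmat m) : cmat m := fun x y => (A y x)^*.
Definition mid m : cmat m := fun x y => (x == y)%:R.

Definition ebasis m (b : bvec m) : cvec m := fun x => (x == b)%:R.

(* 2x2 complex matrices indexed by F_2 and their Kronecker product
   M_0 (x) M_1 (x) ... (x) M_{m-1}  (first tensor factor = first coordinate) *)
Definition mat2 := 'F_2 -> 'F_2 -> algC.
Definition ktensor m (M : 'I_m -> mat2) : cmat m :=
  fun v w => \prod_(i < m) M i (v i ord0) (w i ord0).

Definition I2 : mat2 := fun a c => (a == c)%:R.
Definition H2 : mat2 := fun a c => (-1) ^+ (lift2 a * lift2 c) / sqrtC 2.
Definition sigmaz : mat2 := fun a c => (a == c)%:R * (-1) ^+ lift2 a.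

Definition GD m (Q : 'M['F_2]_m) : cmat m := fun x v => (x == Q^T *m v)%:R.
(* v^T S v computed over the integers *)
Definition qform m (S : 'M['F_2]_m) (v : bvec m) : nat :=
  \sum_(i < m) \sum_(j < m) lift2 (v i ord0) * lift2 (S i j) * lift2 (v j ord0).
Definition GU m (S : 'M['F_2]_m) : cmat m :=
  fun x v => (x == v)%:R * 'i ^+ qform S v.
Definition GOmega m (r : nat) : cmat m :=
  ktensor (fun i : 'I_m => if (i < r)%N then H2 else I2).
Definition Zmr m (r : nat) : cmat m :=
  ktensor (fun i : 'I_m => if (i < r)%N then I2 else sigmaz).

Definition Stilde m r (S : 'M['F_2]_r) : 'M['F_2]_m :=
  \matrix_(i < m, j < m)
    match @insub _ (fun n => n < r)%N _ (val i),
          @insub _ (fun n => n < r)%N _ (val j) with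
    | Some i', Some j' => S i' j'
    | _, _ => 0
    end.

(* Column reduced echelon form data of an m x r matrix HI with pivot rows
   piv 0 < ... < piv (r-1), and cpiv the increasing enumeration of the
   non-pivot indices. *)
Definition echelon_data m r (HI : 'M['F_2]_(m, r)) (piv : 'I_r -> 'I_m)
    (cpiv : 'I_(m - r) -> 'I_m) : Prop :=
  [/\ (forall j k : 'I_r, (j < k)%N -> (piv j < piv k)%N),
      (forall j k : 'I_r, HI (piv k) j = (k == j)%:R),
      (forall (i : 'I_m) (j : 'I_r), (i < piv j)%N -> HI i j = 0),
      (forall j k : 'I_(m - r), (j < k)%N -> (cpiv j < cpiv k)%N) &
      (forall (j : 'I_r) (k : 'I_(m - r)), cpiv k != piv j)].

(* P_I = [H_I  I_{~I}] *)
Definition PI m r (HI : 'M['F_2]_(m, r)) (cpiv : 'I_(m - r) -> 'I_m)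
  : 'M['F_2]_m :=
  \matrix_(i < m, k < m)
    match @insub _ (fun n => n < r)%N _ (val k) with
    | Some k' => HI i k'
    | None =>
      match @insub _ (fun n => n < m - r)%N _ (val k - r)%N with
      | Some k'' => (i == cpiv k'')%:R
      | None => 0
      end
    end.

(* f(v,w,r) = prod_{i=r+1}^m (1 + v_i + w_i) (1-based), as 0/1 *)
Definition fagree m r (v w : bvec m) : algC :=
  (lift2 (\prod_(i < m | (r <= i)%N) (1 + v i ord0 + w i ord0)))%:R.

(* binary subspace chirp w_b^{H,S_r} (H given through its echelon data) *)
Definition bssc m r (HI : 'M['F_2]_(m, r)) (cpiv : 'I_(m - r) -> 'I_m)
    (S : 'M['F_2]_r) (b : bvec m) : cvec m :=
  fun a =>
    let u := invmx (PI HI cpiv) *m a in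
    (sqrtC 2 ^+ r)^-1
    * 'i ^+ (qform (Stilde m S) u
             + 2 * \sum_(i < m) lift2 (b i ord0) * lift2 (u i ord0))
    * fagree r b u.

Arguments GOmega : clear implicits.
Arguments Zmr : clear implicits.
Arguments mid : clear implicits.

(* Main.v *)
Require Import Defs.
From HB Require Import structures.
From mathcomp Require Import all_boot all_order all_algebra.
From mathcomp Require Import algC ring.
From Stdlib Require Import FunctionalExtensionality.
Set Implicit Arguments. Unset Strict Implicit. Unset Printing Implicit Defensive.
Import Order.TTheory GRing.Theory Num.Theory.
Local Open Scope ring_scope.

Lemma PI_lt m r (HI : 'M['F_2]_(m, r)) cpiv i (k : 'I_m) (j : 'I_r) :
  val k = val j -> PI HI cpiv i k = HI i j.
Proof.
move=> Hkj; rewrite mxE; case: insubP => [k' Hk' Hv|Hn].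
  by congr (HI i _); apply: val_inj; rewrite /= Hv Hkj.
by move: Hn; rewrite Hkj ltn_ord.
Qed.

Lemma PI_ge m r (HI : 'M['F_2]_(m, r)) cpiv i (k : 'I_m) (l : 'I_(m - r)) :
  val k = (r + val l)%N -> PI HI cpiv i k = (i == cpiv l)%:R.
Proof.
move=> Hkl; rewrite mxE; case: insubP => [k' Hk' Hv|Hn].
  by move: Hk'; rewrite Hkl ltnNge leq_addr.
case: insubP => [l' Hl' Hv|Hn'].
  by congr ((i == cpiv _)%:R); apply: val_inj; rewrite /= Hv Hkl addKn.
by move: Hn'; rewrite Hkl addKn ltn_ord.
Qed.

Lemma cpiv_inj m r (cpiv : 'I_(m - r) -> 'I_m) :
  (forall j k : 'I_(m - r), (j < k)%N -> (cpiv j < cpiv k)%N) -> injective cpiv.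
Proof.
move=> Hm j k Hjk; apply/eqP; apply: contraT => Hne.
case: (ltngtP j k) => [H|H|H]; last by move: Hne; rewrite (val_inj H) eqxx.
  by move: (Hm _ _ H); rewrite Hjk ltnn.
by move: (Hm _ _ H); rewrite Hjk ltnn.
Qed.

Lemma subr_lt m r (k : 'I_m) : (r <= k)%N -> (k - r < m - r)%N.
Proof. by move=> H; rewrite ltn_sub2r // (leq_ltn_trans H (ltn_ord k)). Qed.

Lemma PI_ker m r (hrm : (r <= m)%N) (HI : 'M['F_2]_(m, r)) piv cpiv
  (hech : echelon_data HI piv cpiv) (x : 'cV['F_2]_m) :
  PI HI cpiv *m x = 0 -> x = 0.
Proof.
case: hech => _ Hpiv _ Hcm Hdis Hx.
have Hlo : forall k : 'I_m, (k < r)%N -> x k 0 = 0.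
  move=> k Hk; pose j := Ordinal Hk.
  have := congr1 (fun M : 'M['F_2]_(m,1) => M (piv j) 0) Hx; rewrite !mxE (bigD1 k) //=.
  rewrite big1 ?addr0.
    by rewrite (@PI_lt _ _ HI cpiv _ _ j) // Hpiv eqxx mul1r.
  move=> k' Hk'; case: (ltnP k' r) => Hk'r.
    rewrite (@PI_lt _ _ HI cpiv _ _ (Ordinal Hk'r)) // Hpiv.
    case: eqP => [Heq|_]; last by rewrite mul0r.
    by move: Hk'; rewrite (_ : k' = k) ?eqxx //; apply: val_inj; rewrite /= -[val k']/(val (Ordinal Hk'r)) -Heq.
  have Hl := subr_lt Hk'r.
  rewrite (@PI_ge _ _ HI cpiv _ _ (Ordinal Hl)) /=; last by rewrite subnKC.
  by rewrite eq_sym (negbTE (Hdis _ _)) mul0r.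
apply/matrixP => k z; rewrite (ord1 z) mxE.
case: (ltnP k r) => Hk; first exact: Hlo.
have Hl := subr_lt Hk.
pose l := Ordinal Hl.
have := congr1 (fun M : 'M['F_2]_(m,1) => M (cpiv l) 0) Hx; rewrite !mxE (bigD1 k) //=.
rewrite big1 ?addr0.
  by rewrite (@PI_ge _ _ HI cpiv _ _ l) /= ?subnKC // eqxx mul1r.
move=> k' Hk'; case: (ltnP k' r) => Hk'r; first by rewrite Hlo // mulr0.
have Hl' := subr_lt Hk'r.
rewrite (@PI_ge _ _ HI cpiv _ _ (Ordinal Hl')) /=; last by rewrite subnKC.
case: eqP => [Heq|_]; last by rewrite mul0r.
have := cpiv_inj Hcm Heq => /(congr1 val) /= Hv.
by move: Hk'; rewrite (_ : k' = k) ?eqxx //; apply: val_inj; rewrite /= -(subnKC Hk'r) -(subnKC Hk) Hv.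
Qed.

Lemma PI_unit m r (hrm : (r <= m)%N) (HI : 'M['F_2]_(m, r)) piv cpiv
  (hech : echelon_data HI piv cpiv) : PI HI cpiv \in unitmx.
Proof.
rewrite -unitmx_tr -row_free_unit -kermx_eq0; apply/eqP/row_matrixP => i.
rewrite row0; set u := row i _.
have Hu : (u <= kermx (PI HI cpiv)^T)%MS by apply: row_sub.
move/sub_kermxP: Hu => Hu.
have : PI HI cpiv *m u^T = 0 by rewrite -[PI _ _]trmxK -trmx_mul Hu trmx0.
by move/(PI_ker hrm hech) => /(congr1 trmx); rewrite trmxK trmx0.
Qed.
Lemma l1 : forall x y : 'F_2, lift2 (1 + x + y) = (y == x).
Proof. by case=> [[|[|?]] ?] [[|[|?]] ?]. Qed.
Lemma l2 : forall x y : 'F_2, lift2 (x * y) = (lift2 x * lift2 y)%N.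
Proof. by case=> [[|[|?]] ?] [[|[|?]] ?]. Qed.
Lemma l3 : forall x : 'F_2, (lift2 x * lift2 x = lift2 x)%N.
Proof. by case=> [[|[|?]] ?]. Qed.

Lemma lift2_prod (I : Type) (s : seq I) (P : pred I) (F : I -> 'F_2) :
  lift2 (\prod_(i <- s | P i) F i) = (\prod_(i <- s | P i) lift2 (F i))%N.
Proof. exact: (big_morph lift2 l2). Qed.

Definition sgn m r (b : bvec m) : algC :=
  \prod_(i < m) (if (i < r)%N then 1 else (-1) ^+ lift2 (b i ord0)).

Lemma mapp_GD m (P : 'M['F_2]_m) v a :
  P \in unitmx -> mapp (GD P^T) v a = v (invmx P *m a).
Proof.
move=> HP; rewrite /mapp /GD trmxK (bigD1 (invmx P *m a)) //= mulKVmx // eqxx mul1r.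
rewrite big1 ?addr0 // => z Hz; case: eqP => [Ha|]; last by rewrite mul0r.
by move: Hz; rewrite Ha mulKmx // eqxx.
Qed.

Lemma mapp_GU m (S : 'M['F_2]_m) v x :
  mapp (GU S) v x = 'i ^+ qform S x * v x.
Proof.
rewrite /mapp (bigD1 x) //= /GU eqxx mul1r big1 ?addr0 // => z Hz.
by rewrite eq_sym (negbTE Hz) !mul0r.
Qed.

Lemma mapp_basis m (A : cmat m) b c x :
  mapp A (fun z => (z == b)%:R * c) x = A x b * c.
Proof.
rewrite /mapp (bigD1 b) //= eqxx mul1r big1 ?addr0 // => z Hz.
by rewrite (negbTE Hz) mul0r mulr0.
Qed.

Lemma prod_eq m (x y : bvec m) :
  \prod_(i < m) ((x i ord0 == y i ord0)%:R : algC) = (x == y)%:R.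
Proof.
case: eqP => [->|Hne]; first by rewrite big1 // => i _; rewrite eqxx.
have [i Hi] : exists i, x i ord0 != y i ord0.
  apply/existsP; apply: contraT; rewrite negb_exists => /forallP H.
  by case: Hne; apply/matrixP => i j; rewrite (ord1 j); apply/eqP/negPn/H.
by rewrite (bigD1 i) //= (negbTE Hi) mul0r.
Qed.

Lemma mapp_Z m r (b : bvec m) x :
  mapp (Zmr m r) (ebasis b) x = (x == b)%:R * sgn r b.
Proof.
have -> : mapp (Zmr m r) (ebasis b) x = Zmr m r x b.
  rewrite /mapp (bigD1 b) //= /ebasis eqxx mulr1 big1 ?addr0 // => z Hz.
  by rewrite (negbTE Hz) mulr0.
rewrite /Zmr /ktensor -prod_eq /sgn -big_split; apply: eq_bigr => i _.
rewrite /=; case: ifP => _; rewrite /I2 /sigmaz ?mulr1 //.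
by case: eqP => [E|]; rewrite ?mul0r ?mul1r // E.
Qed.

Lemma core m r (hrm : (r <= m)%N) (u b : bvec m) q :
  (sqrtC 2 ^+ r)^-1
    * 'i ^+ (q + 2 * \sum_(i < m) lift2 (b i ord0) * lift2 (u i ord0))
    * fagree r b u
  = 'i ^+ q * (GOmega m r u b * sgn r b).
Proof.
have E : GOmega m r u b * sgn r b = \prod_(i < m)
   ((if (i < r)%N then (sqrtC 2)^-1 else 1)
    * (-1) ^+ (lift2 (b i ord0) * lift2 (u i ord0))
    * (if (i < r)%N then 1 else ((u i ord0 == b i ord0)%:R : algC))).
  rewrite /GOmega /ktensor /sgn -big_split; apply: eq_bigr => i _ /=.
  case: ifP => _.
    by rewrite /H2 mulnC !mulr1 mulrC.
  rewrite /I2 mul1r; case: eqP => [->|]; first by rewrite l3 mulr1 mul1r.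
  by rewrite !mulr0 mul0r.
rewrite E !big_split /= prodrXr.
have -> : \prod_(i < m) (if (i < r)%N then (sqrtC 2)^-1 else 1 : algC) = (sqrtC 2 ^+ r)^-1.
  rewrite -big_mkcond /= -(big_ord_widen m (fun _ => (sqrtC 2)^-1)) //.
  by rewrite prodr_const card_ord exprVn.
have -> : \prod_(i < m) (if (i < r)%N then 1 else ((u i ord0 == b i ord0)%:R : algC))
   = fagree r b u.
  rewrite /fagree lift2_prod natr_prod [RHS]big_mkcond; apply: eq_bigr => i _.
  rewrite (leqNgt r i); case: (i < r)%N => //=.
  by case: (u i ord0) => [[|[|?]] ?]; case: (b i ord0) => [[|[|?]] ?].
set N := (\sum_(i < m) lift2 (b i ord0) * lift2 (u i ord0))%N.
have -> : 'i ^+ (q + 2 * N)%N = 'i ^+ q * (-1) ^+ N :> algC.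
  by rewrite exprD exprM sqrCi.
ring.
Qed.
Lemma sumF2 (f : 'F_2 -> algC) : \sum_(c : 'F_2) f c = f 0 + f 1.
Proof.
rewrite big_ord_recl big_ord_recl big_ord0 addr0.
by congr (f _ + f _); apply: val_inj.
Qed.

Lemma H2_conj a c : (H2 a c)^* = H2 a c.
Proof.
by rewrite /H2 rmorphM rmorphXn rmorphN1 fmorphV /= geC0_conj // sqrtC_ge0 ler0n.
Qed.

Lemma H2_unit a b : \sum_(c : 'F_2) H2 a c * (H2 b c)^* = (a == b)%:R.
Proof.
under eq_bigr do rewrite H2_conj /H2 mulrACA -expr2 exprVn sqrtCK.
rewrite -big_distrl /= sumF2.
case: a => [[|[|?]] ?]; case: b => [[|[|?]] ?] //; rewrite /lift2 /= ?expr0 ?expr1 ?mulr1 ?mul1r ?mulN1r ?opprK ?subrr ?mul0r //.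
all: by rewrite -[1 + 1]/(2%:R) divff // pnatr_eq0.
Qed.

Lemma I2_unit a b : \sum_(c : 'F_2) I2 a c * (I2 b c)^* = (a == b)%:R.
Proof.
rewrite (bigD1 b) //= /I2 eqxx rmorph1 mulr1 big1 ?addr0 // => c Hc.
by rewrite [b == c]eq_sym (negbTE Hc) rmorph0 mulr0.
Qed.

Lemma GO_unit m r (v w : bvec m) :
  \sum_(z : bvec m) GOmega m r v z * (GOmega m r w z)^* = (v == w)%:R.
Proof.
rewrite /GOmega /ktensor.
under eq_bigr do rewrite rmorph_prod -big_split /=.
rewrite (reindex (fun f : {ffun 'I_m -> 'F_2} => \col_i f i)) /=; last first.
  apply: onW_bij; exists (fun z : bvec m => [ffun i => z i ord0]) => [f|z].
    by apply/ffunP => i; rewrite ffunE mxE.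
  by apply/matrixP => i j; rewrite mxE ffunE (ord1 j).
under eq_bigr do under eq_bigr do rewrite mxE.
rewrite -(bigA_distr_bigA (fun (i : 'I_m) c =>
   (if (i < r)%N then H2 else I2) (v i ord0) c
   * ((if (i < r)%N then H2 else I2) (w i ord0) c)^*)) /=.
rewrite -prod_eq; apply: eq_bigr => i _; case: ifP => _.
  exact: H2_unit.
exact: I2_unit.
Qed.

Lemma mapp_ext m (A : cmat m) (v v' : cvec m) x :
  (forall z, v z = v' z) -> mapp A v x = mapp A v' x.
Proof. by move=> H; apply: eq_bigr => z _; rewrite H. Qed.

Theorem mainTheorem4 (m r : nat) (hrm : (r <= m)%N)
  (H : 'M['F_2]_m) (hH : \rank H = r)
  (HI : 'M['F_2]_(m, r)) (piv : 'I_r -> 'I_m) (cpiv : 'I_(m - r) -> 'I_m)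
  (hech : echelon_data HI piv cpiv)
  (hspan : (HI^T == H)%MS)
  (S : 'M['F_2]_r) (hS : S^T = S)
  (b : bvec m) :
  let U := mmul (GD (PI HI cpiv)^T) (mmul (GU (Stilde m S)) (GOmega m r)) in
  [/\ forall a : bvec m,
        bssc HI cpiv S b a
        = mapp (GD (PI HI cpiv)^T)
            (mapp (GU (Stilde m S))
              (mapp (GOmega m r) (mapp (Zmr m r) (ebasis b)))) a,
      exists s : algC, (s = 1 \/ s = -1) /\
        forall a : bvec m, bssc HI cpiv S b a = s * U a b &
      mmul U (madj U) = mid m].
Proof.
move=> U.
have HP := PI_unit hrm hech.
have Ua : forall a y, U a y = 'i ^+ qform (Stilde m S) (invmx (PI HI cpiv) *m a)
    * GOmega m r (invmx (PI HI cpiv) *m a) y.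
  move=> a y.
  have -> : U a y = mapp (GD (PI HI cpiv)^T)
      (mapp (GU (Stilde m S)) (fun w => GOmega m r w y)) a by [].
  by rewrite mapp_GD // mapp_GU.
have Hw : forall a, bssc HI cpiv S b a =
    'i ^+ qform (Stilde m S) (invmx (PI HI cpiv) *m a)
    * (GOmega m r (invmx (PI HI cpiv) *m a) b * sgn r b).
  by move=> a; rewrite /bssc /= core.
split.
- move=> a; rewrite Hw mapp_GD // mapp_GU.
  by rewrite (mapp_ext _ _ (mapp_Z r b)) mapp_basis.
- exists (sgn r b); split.
    have -> : sgn r b = (-1) ^+ (\sum_(i < m) (if (i < r)%N then 0 else lift2 (b i ord0)))%N.
      by rewrite /sgn -prodrXr; apply: eq_bigr => i _; case: ifP.
    rewrite -signr_odd; case: odd; [by right; rewrite expr1 | by left; rewrite expr0].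
  by move=> a; rewrite Hw Ua [_ * sgn r b]mulrC mulrCA.
apply: functional_extensionality => x; apply: functional_extensionality => y.
rewrite /mmul /madj /mid.
under eq_bigr do rewrite !Ua rmorphM mulrACA.
rewrite -big_distrr /= GO_unit.
case: (x =P y) => [->|Hne].
  by rewrite eqxx mulr1 -normCK normrX normCi !expr1n.
case: eqP => [E|_]; last by rewrite mulr0.
by case: Hne; rewrite -(mulKVmx HP x) E mulKVmx.
Qed.
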